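(* Let $G=(V,E)$ be a finite, connected, undirected graph with $n\ge2$ vertices and let $r>1$. For any $\epsilon\in(0,1)$ and any $t\ge\frac{r}{r-1}n^3\phi(G)/\epsilon$, the Moran process on $G$ with fitness $r$ (started from a single mutant) reaches absorption within $t$ steps with probability at least $1-\epsilon$.
   Context: The Moran process on $G$ with mutant fitness $r>0$ is the Markov chain $(X_i)_{i\ge0}$ whose state $X_i\subseteq V$ is the set of vertices occupied by mutants; every other vertex is occupied by a non-mutant of fitness $1$. Write $W(S)=r|S|+|V\setminus S|$ for the total fitness. Given $X_i=S$, one step is: choose a vertex $x$ with probability $r/W(S)$ if $x\in S$ and $1/W(S)$ if $x\notin S$; then choose a neighbour $y$ of $x$ uniformly at random; set $X_{i+1}=S\cup\{y\}$ if $x\in S$ and $X_{i+1}=S\setminus\{y\}$ if $x\notin S$. The process starts from $X_0=\{x\}$ for a single vertex $x$. Absorption means reaching $X_i=\emptyset$ or $X_i=V$. For $X\subseteq V$, $\phi(X)=\sum_{x\in X}\frac{1}{\deg x}$, and $\phi(G)=\phi(V)$. *)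

(* Defs.v *)
(* Graph: finite type T with symmetric irreflexive edge relation e. *)
From HB Require Import structures.
From mathcomp Require Import all_boot all_order all_algebra.
Set Implicit Arguments. Unset Strict Implicit. Unset Printing Implicit Defensive.
Import Order.TTheory GRing.Theory Num.Theory.
Local Open Scope ring_scope.

Section Moran.
Variables (T : finType) (e : rel T) (R : realFieldType) (r : R).

Definition deg (x : T) : nat := #|[set y | e x y]|.

Definition phi_set (X : {set T}) : R := \sum_(x in X) ((deg x)%:R)^-1.
Definition phiG : R := phi_set [set: T].

Definition Wfit (S : {set T}) : R := r * #|S|%:R + #|~: S|%:R.

Definition fit (S : {set T}) (x : T) : R := if x \in S then r else 1.

(* state after x reproduces onto neighbour y *)
Definition next_state (S : {set T}) (x y : T) : {set T} :=
  if x \in S then y |: S else S :\ y.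

Definition absorbed (S : {set T}) : bool := (S == set0) || (S == [set: T]).

(* survival t S = probability that the Moran process started at X_0 = S
   has NOT reached an absorbing state among X_0, ..., X_t. *)
Fixpoint survival (t : nat) (S : {set T}) : R :=
  if absorbed S then 0 else
  match t with
  | 0 => 1
  | t'.+1 =>
      \sum_(x : T) \sum_(y : T | e x y)
         (fit S x / Wfit S) * ((deg x)%:R)^-1 * survival t' (next_state S x y)
  end.

Definition absorb_within (t : nat) (S : {set T}) : R := 1 - survival t S.

End Moran.

(* Main.v *)
Require Import Defs.
From HB Require Import structures.
From mathcomp Require Import all_boot all_order all_algebra.
From mathcomp Require Import ring lra.
Import Order.TTheory GRing.Theory Num.Theory.
Local Open Scope ring_scope.

Section Pf.
Variables (T : finType) (e : rel T) (e_sym : symmetric e).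
Hypothesis e_conn : forall x y : T, connect e x y.
Hypothesis n_ge2 : (2 <= #|T|)%N.
Variables (R : realFieldType) (r : R).
Hypothesis hr : 1 < r.
Ltac lra' := have ? := hr; lra.

Lemma deg_pos x : (0 < deg e x)%N.
Proof.
have [a [b [_ _ ab]]] : exists a b : T, [/\ a \in T, b \in T & a != b].
  by apply/card_gt1P.
have [y yx] : exists y, y != x.
  by case: (eqVneq a x) => [ax|]; [exists b; rewrite -ax eq_sym | exists a].
have /connectP [p pth yl] := e_conn x y.
case: p pth yl => [|z p] /=; first by move=> _ yx'; rewrite yx' eqxx in yx.
move=> /andP [exz _] _.
by apply/card_gt0P; exists z; rewrite inE.
Qed.

Lemma deg_le x : (deg e x <= #|T|)%N.
Proof. exact: max_card. Qed.

Lemma Wfit_ge (S : {set T}) : #|T|%:R <= Wfit r S.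
Proof.
rewrite /Wfit -(cardsC S) natrD.
have h1 : 0 <= #|S|%:R :> R by [].
have h2 : 0 <= (r-1) * #|S|%:R. apply: mulr_ge0. rewrite subr_ge0. exact: ltW. exact: ler0n.
have h3 : (r - 1) * #|S|%:R = r * #|S|%:R - #|S|%:R by ring.
lra'.
Qed.

Lemma Wfit_le (S : {set T}) : Wfit r S <= r * #|T|%:R.
Proof.
rewrite /Wfit -(cardsC S) natrD.
have h1 : 0 <= #|~: S|%:R :> R by [].
have h2 : 0 <= r - 1 by lra'.
have h3 := mulr_ge0 h2 h1.
have h4 : (r - 1) * #|~:S|%:R = r * #|~:S|%:R - #|~:S|%:R by ring.
lra'.
Qed.

Lemma n_pos : 0 < #|T|%:R :> R.
Proof. by rewrite ltr0n; apply: leq_trans n_ge2. Qed.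

Lemma Wfit_pos (S : {set T}) : 0 < Wfit r S.
Proof. exact: lt_le_trans n_pos (Wfit_ge S). Qed.

Lemma sum_fit (S : {set T}) : \sum_x fit r S x = Wfit r S.
Proof.
rewrite (bigID (fun x => x \in S)) /=.
rewrite (eq_bigr (fun _ => r)); last by move=> x xS; rewrite /fit xS.
rewrite [X in _ + X](eq_bigr (fun _ => 1)); last by move=> x /negbTE; rewrite /fit => ->.
rewrite !sumr_const /Wfit mulr_natr -[1 *+ _]mulr_natr mul1r; congr (_ + _).

by congr (_%:R); apply: eq_card => x; rewrite !inE.
Qed.

Local Notation pr S x := (fit r S x / Wfit r S * ((deg e x)%:R)^-1).
Local Notation d x := (((deg e x)%:R : R)^-1).

Lemma pr_ge0 (S : {set T}) x : 0 <= pr S x.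
Proof.
rewrite /fit; apply: mulr_ge0; last by rewrite invr_ge0.
apply: divr_ge0; last exact: ltW (Wfit_pos S).
by case: (x \in S) => //; lra'.
Qed.

Lemma mulrnVK (c0 : R) k : (0 < k)%N -> c0 * (k%:R)^-1 *+ k = c0.
Proof.
move=> k0; rewrite -[c0 * _ *+ k]mulr_natr -mulrA mulVf ?mulr1 //.
by rewrite pnatr_eq0 -lt0n.
Qed.

Lemma sum_pr (S : {set T}) : \sum_x \sum_(y | e x y) pr S x = 1.
Proof.
under eq_bigr => x _.
  rewrite (eq_bigl (fun y => y \in [set y | e x y])); last by move=> y; rewrite inE.
  rewrite sumr_const -/(deg e x) mulrnVK; last exact: deg_pos.
  over.
by rewrite /= -mulr_suml sum_fit divff // gt_eqF // Wfit_pos.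
Qed.

Lemma phi_next (S : {set T}) x y :
  phi_set e R (next_state S x y) = phi_set e R S +
   (if x \in S then (if y \in S then 0 else d y) else (if y \in S then - d y else 0)).
Proof.
rewrite /next_state /phi_set; case: (x \in S); case yS: (y \in S).
- rewrite addr0; have -> : y |: S = S by apply/setP => z; rewrite !inE; case: eqP => // ->.
  by [].
- by rewrite big_setU1 /= ?yS // addrC.
- by rewrite [in RHS](big_setD1 y) //=; ring.
- rewrite addr0; have -> : S :\ y = S by apply/setP => z; rewrite !inE; case: eqP => // ->; rewrite yS.
  by [].
Qed.

Definition c (S : {set T}) x y : R := if (x \in S) && (y \notin S) then d x * d y else 0.
Definition C (S : {set T}) : R := \sum_x \sum_(y | e x y) c S x y.

Lemma term_eq (S : {set T}) x y :
  pr S x * phi_set e R (next_state S x y) =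
  pr S x * phi_set e R S + (Wfit r S)^-1 * (r * c S x y - c S y x).
Proof.
rewrite phi_next /c /fit; case: (x \in S); case: (y \in S) => /=; ring.
Qed.

Lemma swap_sum (F : T -> T -> R) :
  \sum_x \sum_(y | e x y) F y x = \sum_x \sum_(y | e x y) F x y.
Proof.
under eq_bigr do rewrite big_mkcond.
rewrite exchange_big; apply: eq_bigr => x _; rewrite [RHS]big_mkcond.
by apply: eq_bigr => y _; rewrite e_sym.
Qed.

Lemma drift (S : {set T}) :
  \sum_x \sum_(y | e x y) pr S x * phi_set e R (next_state S x y) =
  phi_set e R S + (Wfit r S)^-1 * (r - 1) * C S.
Proof.
under eq_bigr do under eq_bigr do rewrite term_eq.
under eq_bigr do rewrite big_split /=.
rewrite big_split /=.
under eq_bigr do rewrite -mulr_suml.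
rewrite -mulr_suml sum_pr mul1r; congr (_ + _).
under eq_bigr do rewrite -mulr_sumr.
rewrite -mulr_sumr -mulrA; congr (_ * _).
under eq_bigr do rewrite sumrB.
rewrite sumrB swap_sum /C.
under eq_bigr do rewrite -mulr_sumr.
rewrite -mulr_sumr (swap_sum (c S)); ring.
Qed.

Lemma boundary (S : {set T}) : ~~ absorbed S ->
  exists a b, [/\ a \in S, b \notin S & e a b].
Proof.
move=> /norP [S0 ST]; have [a aS] := set0Pn _ S0.
case: (boolP [exists a, exists b, [&& a \in S, b \notin S & e a b]]).
  move=> /existsP [a' /existsP [b /and3P [h1 h2 h3]]]; by exists a', b.
move=> H.
have noedge : forall x y, x \in S -> y \notin S -> e x y -> False.
  move=> x y xS yS exy; move/negP: H; apply; apply/existsP; exists x.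
  by apply/existsP; exists y; rewrite xS yS exy.
have cl : closed e S.
  move=> x y exy; case xS: (x \in S); case yS: (y \in S) => //.
    by exfalso; apply: (noedge x y) => //; rewrite yS.
  by exfalso; apply: (noedge y x) => //; [rewrite xS | rewrite e_sym].
case/negP: ST; apply/eqP/setP => y; rewrite inE.
by rewrite -(closed_connect cl (e_conn a y)) aS.
Qed.

Local Notation n := (#|T|%:R : R).

Lemma d_ge x : n^-1 <= d x.
Proof.
rewrite lef_pV2 ?posrE ?ltr0n ?deg_pos ?n_pos // ?ler_nat ?deg_le //.
by apply: leq_trans n_ge2.
Qed.

Lemma d_ge0 x : 0 <= d x.
Proof. by rewrite invr_ge0. Qed.

Lemma c_ge0 (S : {set T}) x y : 0 <= c S x y.
Proof. by rewrite /c; case: ifP => // _; apply: mulr_ge0; apply: d_ge0. Qed.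

Lemma C_ge (S : {set T}) : ~~ absorbed S -> n^-1 * n^-1 <= C S.
Proof.
move=> /boundary [a [b [aS bS eab]]].
rewrite /C (bigD1 a) //= (bigD1 b) //= {1}/c aS bS /=.
have h1 : 0 <= \sum_(y | e a y && (y != b)) c S a y by apply: sumr_ge0 => *; apply: c_ge0.
have h2 : 0 <= \sum_(i | i != a) \sum_(y | e i y) c S i y.
  by apply: sumr_ge0 => *; apply: sumr_ge0 => *; apply: c_ge0.
have h3 : n^-1 * n^-1 <= d a * d b.
  apply: ler_pM; rewrite ?invr_ge0 ?ler0n //; exact: d_ge.
lra.
Qed.

Definition delta : R := (r - 1) / (r * n ^+ 3).

Lemma delta_ge0 : 0 <= delta.
Proof.
rewrite /delta; apply: divr_ge0; first by rewrite subr_ge0 ltW.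
apply: mulr_ge0; first by apply: ltW; apply: lt_trans hr.
by apply: exprn_ge0; apply: ltW n_pos.
Qed.

Lemma D_ge (S : {set T}) : ~~ absorbed S ->
  delta <= (Wfit r S)^-1 * (r - 1) * C S.
Proof.
move=> hS.
have r0 : 0 < r by apply: lt_trans hr.
have hw : (r * n)^-1 <= (Wfit r S)^-1.
  rewrite lef_pV2 ?posrE ?Wfit_pos ?mulr_gt0 ?n_pos //; exact: Wfit_le.
have -> : delta = (r * n)^-1 * (r - 1) * (n^-1 * n^-1).
  rewrite /delta; field; apply/andP; split; rewrite ?gt_eqF ?n_pos //.
apply: ler_pM; last exact: C_ge.
- apply: mulr_ge0; first by rewrite invr_ge0 mulr_ge0 // ?ltW // n_pos.
  by rewrite subr_ge0 ltW.
- by apply: mulr_ge0; rewrite invr_ge0 ltW // n_pos.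
apply: ler_wpM2r hw; by rewrite subr_ge0 ltW.
Qed.

Lemma sv_le1 t (S : {set T}) : survival e r t S <= 1.
Proof.
elim: t S => [|t IH] S /=; first by case: ifP.
case: ifP => // _.
apply: (@le_trans _ _ (\sum_x \sum_(y | e x y) pr S x)); last by rewrite sum_pr.
apply: ler_sum => x _; apply: ler_sum => y _.
by apply: ler_piMr; [apply: pr_ge0 | apply: IH].
Qed.

Lemma phi_le (S : {set T}) : phi_set e R S <= phiG e R.
Proof.
rewrite /phiG /phi_set big_mkcond [X in _ <= X]big_mkcond /=.
apply: ler_sum => x _; rewrite in_setT; case: ifP => // _; exact: d_ge0.
Qed.

Lemma mainb t (S : {set T}) :
  delta * t%:R * survival e r t S <= phiG e R - phi_set e R S.
Proof.
elim: t S => [|t IH] S.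
  by rewrite mulr0 mul0r subr_ge0 phi_le.
rewrite /=; case: ifP => hS; first by rewrite mulr0 subr_ge0 phi_le.
set G := phiG e R.
apply: (@le_trans _ _ (\sum_x \sum_(y | e x y)
    pr S x * (G - phi_set e R (next_state S x y) + delta))).
  rewrite mulr_sumr; apply: ler_sum => x _; rewrite mulr_sumr; apply: ler_sum => y _.
  have h1 := IH (next_state S x y).
  have h2 := ler_piMr delta_ge0 (sv_le1 t (next_state S x y)).
  have hp := pr_ge0 S x.
  rewrite -/G in h1.
  set s := survival e r t (next_state S x y) in h1 h2 *.
  set p := pr S x in hp *.
  have -> : delta * (t.+1)%:R * (p * s) = p * (delta * t%:R * s + delta * s).
    by rewrite -addn1 natrD; ring.
  apply: (ler_wpM2l hp); lra.
have -> : \sum_x \sum_(y | e x y) pr S x * (G - phi_set e R (next_state S x y) + delta)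
   = \sum_x \sum_(y | e x y) (pr S x * (G + delta) - pr S x * phi_set e R (next_state S x y)).
  by apply: eq_bigr => x _; apply: eq_bigr => y _; ring.
under eq_bigr do rewrite sumrB.
rewrite sumrB drift.
under eq_bigr do rewrite -mulr_suml.
rewrite -mulr_suml sum_pr mul1r.
have := D_ge S (negbT hS); lra.
Qed.

End Pf.

Theorem corollary8 (T : finType) (e : rel T)
  (e_sym : symmetric e) (e_irr : irreflexive e)
  (e_conn : forall x y : T, connect e x y)
  (n_ge2 : (2 <= #|T|)%N)
  (R : realFieldType) (r : R) (hr : 1 < r)
  (eps : R) (heps0 : 0 < eps) (heps1 : eps < 1)
  (t : nat)
  (ht : r / (r - 1) * (#|T|%:R ^+ 3) * phiG e R / eps <= t%:R)
  (x0 : T) :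
  1 - eps <= absorb_within e r t [set x0].
Proof.
have hm := @mainb T e e_sym e_conn n_ge2 R r hr t [set x0].
have hphi : 0 <= phi_set e R [set x0].
  by apply: sumr_ge0 => x _; rewrite invr_ge0.
have hn : 0 < #|T|%:R :> R by rewrite ltr0n; apply: leq_trans n_ge2.
have hG : 0 < phiG e R.
  rewrite /phiG /phi_set (bigD1 x0) ?in_setT //=.
  have : 0 <= \sum_(i in [set: T] | i != x0) ((deg e i)%:R : R)^-1.
    by apply: sumr_ge0 => x _; rewrite invr_ge0.
  have : 0 < ((deg e x0)%:R : R)^-1 by rewrite invr_gt0 ltr0n (@deg_pos T e e_conn n_ge2).
  lra.
have hd : 0 < delta T R r.
  rewrite /delta; apply: divr_gt0; first by rewrite subr_gt0.
  by apply: mulr_gt0; [apply: lt_trans hr | apply: exprn_gt0].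
have hGt : phiG e R <= delta T R r * eps * t%:R.
  have := ler_wpM2r (ltW (mulr_gt0 heps0 hd)) ht.
  have -> : r / (r - 1) * #|T|%:R ^+ 3 * phiG e R / eps * (eps * delta T R r) = phiG e R.
    rewrite /delta; field.
    have r0 : r != 0 by rewrite gt_eqF //; apply: lt_trans hr.
    have r1 : r - 1 != 0 by rewrite gt_eqF // subr_gt0.
    by rewrite r0 r1 gt_eqF // gt_eqF.
  by rewrite [X in _ -> _ <= X](_ : _ = t%:R * (eps * delta T R r)) //; ring.
have ht0 : 0 < t%:R :> R.
  case: t ht hm hGt => [|t'] _ _; last by rewrite ltr0n.
  rewrite mulr0 => ?; lra.
have hdt : 0 < delta T R r * t%:R by apply: mulr_gt0.
set s := survival e r t [set x0] in hm *.
have : (delta T R r * t%:R) * s <= (delta T R r * t%:R) * eps.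
  have -> : delta T R r * t%:R * eps = delta T R r * eps * t%:R by ring.
  lra.
rewrite ler_pM2l // /absorb_within -/s => ?; lra.
Qed.
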